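(* Let $A=\begin{pmatrix}2&-4\\-1&2\end{pmatrix}$ and $\mathfrak g=\mathfrak g(A)$ the corresponding affine Kac–Moody algebra. Then (1) every $\pi$-system $\Sigma\subseteq\Delta^+_{\mathrm{re}}$ with $|\Sigma|>1$ is of the form $\{\beta_1^j,\beta_2^k\}$ for some $j,k\in\mathbb Z_+$; conversely, $\{\beta_1^j,\beta_2^k\}$ is a $\pi$-system iff either $j\not\equiv1\pmod2$ or $k\not\equiv j+3\pmod4$; (2) every $\pi$-system $\Sigma\subseteq\Delta_{\mathrm{re}}$ with $|\Sigma|>1$ is either as in (1) or of the form $\{\beta_i^j,-\beta_i^k\}$ for some $j,k\in\mathbb Z_+$, $i\in\{1,2\}$; conversely, $\{\beta_i^j,-\beta_i^k\}$ is a $\pi$-system iff at least one of $j\not\equiv i\pmod2$, $k\not\equiv i\pmod2$, $j\equiv k\pmod4$ holds.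
   Context: $\mathfrak g(A)$ has simple roots $\alpha_1,\alpha_2$, root system $\Delta$, real roots $\Delta_{\mathrm{re}}$, positive real roots $\Delta^+_{\mathrm{re}}$. $\mathbb Z_+=\{0,1,2,\dots\}$. Define $c_0=d_0=0$, $c_1=d_1=1$, $c_{k+2}+c_k=4d_{k+1}$, $d_{k+2}+d_k=c_{k+1}$, and $\beta_1^j=c_j\alpha_1+d_{j+1}\alpha_2$, $\beta_2^j=c_{j+1}\alpha_1+d_j\alpha_2$ ($j\in\mathbb Z_+$); explicitly, with $\delta=2\alpha_1+\alpha_2$ and $\epsilon=\alpha_1$, $\beta_1^{2k}=-2\epsilon+(2k+1)\delta$, $\beta_1^{2k+1}=-\epsilon+(k+1)\delta$, $\beta_2^{2k}=\epsilon+k\delta$, $\beta_2^{2k+1}=2\epsilon+(2k+1)\delta$, and these are all the positive real roots. A subset $\Sigma\subseteq\Delta_{\mathrm{re}}$ is a $\pi$-system if $\alpha-\beta\notin\Delta$ for all $\alpha,\beta\in\Sigma$. *)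

(* Defs.v *)
(* Roots of g(A), A = [[2,-4],[-1,2]], are encoded by their
   coordinates (a,b) in the root lattice: (a,b) stands for a*alpha1 + b*alpha2. *)
From Stdlib Require Import ZArith Arith Lia.
Open Scope Z_scope.

Definition rt := (Z * Z)%type.

Definition alpha1 : rt := (1, 0).
Definition alpha2 : rt := (0, 1).

Definition rt_add (x y : rt) : rt := (fst x + fst y, snd x + snd y).
Definition rt_opp (x : rt) : rt := (- fst x, - snd x).
Definition rt_sub (x y : rt) : rt := rt_add x (rt_opp y).

(* Cartan matrix A = (a_ij), a_11 = 2, a_12 = -4, a_21 = -1, a_22 = 2.
   <alpha_j, alpha_i^v> = a_ij. *)
Definition A (i j : nat) : Z :=
  match i, j with
  | 1%nat, 1%nat => 2 | 1%nat, 2%nat => -4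
  | 2%nat, 1%nat => -1 | 2%nat, 2%nat => 2
  | _, _ => 0
  end.

Definition pairing (x : rt) (i : nat) : Z := fst x * A i 1 + snd x * A i 2.

Definition refl1 (x : rt) : rt := (fst x - pairing x 1, snd x).
Definition refl2 (x : rt) : rt := (fst x, snd x - pairing x 2).

Inductive W_orbit (S : rt -> Prop) : rt -> Prop :=
| Wo_base x : S x -> W_orbit S x
| Wo_s1 x : W_orbit S x -> W_orbit S (refl1 x)
| Wo_s2 x : W_orbit S x -> W_orbit S (refl2 x).

(* Real roots: the Weyl group orbit of the simple roots (Kac, Prop. 5.1). *)
Definition real_root (x : rt) : Prop :=
  W_orbit (fun y => y = alpha1 \/ y = alpha2) x.

(* Kac's fundamental set K: nonzero alpha in Q_+ with connected support and
   <alpha, alpha_i^v> <= 0 for all i.  The Dynkin diagram of A has an edge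
   between 1 and 2, so every nonempty support is connected. *)
Definition fundamental_set (x : rt) : Prop :=
  0 <= fst x /\ 0 <= snd x /\ x <> (0, 0) /\
  pairing x 1 <= 0 /\ pairing x 2 <= 0.

(* Imaginary roots: Delta_im = W.K  union  -W.K (Kac, Thm 5.4). *)
Definition imag_root (x : rt) : Prop :=
  W_orbit fundamental_set x \/ W_orbit fundamental_set (rt_opp x).

Definition root (x : rt) : Prop := real_root x \/ imag_root x.

Definition pos_rt (x : rt) : Prop := 0 <= fst x /\ 0 <= snd x.

(* Sequences c_k, d_k: c_0 = d_0 = 0, c_1 = d_1 = 1,
   c_{k+2} + c_k = 4 d_{k+1}, d_{k+2} + d_k = c_{k+1}.
   cd k = (c_k, d_k, c_{k+1}, d_{k+1}). *)
Fixpoint cd (k : nat) : Z * Z * Z * Z :=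
  match k with
  | O => (0, 0, 1, 1)
  | S k' => let '(c0, d0, c1, d1) := cd k' in (c1, d1, 4 * d1 - c0, c1 - d0)
  end.

Definition c (k : nat) : Z := let '(c0, _, _, _) := cd k in c0.
Definition d (k : nat) : Z := let '(_, d0, _, _) := cd k in d0.

Definition beta1 (j : nat) : rt := (c j, d (S j)).
Definition beta2 (j : nat) : rt := (c (S j), d j).
Definition beta (i : nat) (j : nat) : rt := if Nat.eqb i 1 then beta1 j else beta2 j.

Definition pi_system (Sigma : rt -> Prop) : Prop :=
  forall x y, Sigma x -> Sigma y -> ~ root (rt_sub x y).

Definition card_gt1 (Sigma : rt -> Prop) : Prop :=
  exists x y, Sigma x /\ Sigma y /\ x <> y.

Definition pair_set (x y : rt) : rt -> Prop := fun z => z = x \/ z = y.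

Definition set_eq (S T : rt -> Prop) : Prop := forall z, S z <-> T z.

(* Main.v *)
Require Import Defs.
From Stdlib Require Import ZArith Arith Lia ZifyNat.
Ltac zl := zify; Z.to_euclidean_division_equations; lia.
Ltac ltbs := repeat match goal with
  | |- context [?x <? ?y] => destruct (Z.ltb_spec x y)
  | H : context [?x <? ?y] |- _ => destruct (Z.ltb_spec x y)
  end.
Module Helpers.
Local Open Scope Z_scope.

Definition RR (x : rt) : Prop :=
  fst x - 2 * snd x = 1 \/ fst x - 2 * snd x = -1 \/
  ((fst x - 2 * snd x = 2 \/ fst x - 2 * snd x = -2) /\ snd x mod 2 = 1).
Definition Rt (x : rt) : Prop :=
  RR x \/ (fst x = 2 * snd x /\ snd x <> 0).

Lemma real_RR x : real_root x -> RR x.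
Proof.
  induction 1 as [x H|x _ IH|x _ IH].
  - destruct H; subst; unfold RR, alpha1, alpha2; cbn [fst snd A]; zl.
  - destruct x as [a b]; unfold RR, refl1, pairing, A in *; cbn [fst snd A] in *. zl.
  - destruct x as [a b]; unfold RR, refl2, pairing, A in *; cbn [fst snd A] in *; zl.
Qed.

Lemma rs1 x y : real_root x -> refl1 x = y -> real_root y.
Proof. intros H <-. now apply Wo_s1. Qed.
Lemma rs2 x y : real_root x -> refl2 x = y -> real_root y.
Proof. intros H <-. now apply Wo_s2. Qed.

Ltac rfl := unfold refl1, refl2, pairing, A; cbn [fst snd A]; f_equal; lia.

Lemma chainP : forall k, real_root (2*k+1, k) /\ real_root (2*k-1, k).
Proof.
  apply Z.peano_ind.
  - split. apply Wo_base; now left.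
    apply (rs1 (1,0)). apply Wo_base; now left. rfl.
  - intros k [H1 H2].
    assert (H3 : real_root (2*Z.succ k - 1, Z.succ k)) by (apply (rs2 _ _ H1); rfl).
    split; [apply (rs1 _ _ H3); rfl | exact H3].
  - intros k [H1 H2].
    assert (H3 : real_root (2*Z.pred k + 1, Z.pred k)) by (apply (rs2 _ _ H2); rfl).
    split; [exact H3 | apply (rs1 _ _ H3); rfl].
Qed.

Lemma chainQ : forall t, real_root (4*t+4, 2*t+1) /\ real_root (4*t, 2*t+1).
Proof.
  apply Z.peano_ind.
  - split. apply (rs1 (0,1)). apply Wo_base; now right. rfl.
    apply Wo_base; now right.
  - intros k [H1 H2].
    assert (H3 : real_root (4*Z.succ k, 2*Z.succ k+1)) by (apply (rs2 _ _ H1); rfl).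
    split; [apply (rs1 _ _ H3); rfl | exact H3].
  - intros k [H1 H2].
    assert (H3 : real_root (4*Z.pred k+4, 2*Z.pred k+1)) by (apply (rs2 _ _ H2); rfl).
    split; [exact H3 | apply (rs1 _ _ H3); rfl].
Qed.

Lemma RR_real x : RR x -> real_root x.
Proof.
  destruct x as [a b]; unfold RR; cbn [fst snd A]; intros [H|[H|[[H|H] Ho]]].
  - replace (a,b) with (2*b+1,b) by (f_equal; lia). apply chainP.
  - replace (a,b) with (2*b-1,b) by (f_equal; lia). apply chainP.
  - replace (a,b) with (4*(b/2)+4,2*(b/2)+1) by (f_equal; zl). apply chainQ.
  - replace (a,b) with (4*(b/2),2*(b/2)+1) by (f_equal; zl). apply chainQ.
Qed.

Lemma fund_orbit x : W_orbit fundamental_set x -> fst x = 2 * snd x /\ snd x > 0.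
Proof.
  induction 1 as [x H|x _ IH|x _ IH].
  - destruct x as [a b]; unfold fundamental_set, pairing, A in H; cbn [fst snd A] in *.
    destruct H as (H1&H2&H3&H4&H5).
    assert (b <> 0) by (intro; subst; apply H3; f_equal; lia). lia.
  - destruct x as [a b]; unfold refl1, pairing, A in *; cbn [fst snd A] in *; lia.
  - destruct x as [a b]; unfold refl2, pairing, A in *; cbn [fst snd A] in *; lia.
Qed.

Lemma root_Rt x : root x <-> Rt x.
Proof.
  split.
  - intros [H|[H|H]].
    + left; now apply real_RR.
    + right; apply fund_orbit in H; lia.
    + right; apply fund_orbit in H; destruct x; unfold rt_opp in H; cbn [fst snd A] in *; lia.
  - intros [H|H].
    + left; now apply RR_real.
    + right. destruct x as [a b]; cbn [fst snd] in H.
      destruct (Z_lt_ge_dec 0 b).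
      * left; apply Wo_base; unfold fundamental_set, pairing, A; cbn [fst snd A].
        repeat split; try lia. intro E; injection E; lia.
      * right; apply Wo_base; unfold fundamental_set, rt_opp, pairing, A; cbn [fst snd A].
        repeat split; try lia. intro E; injection E; lia.
Qed.

Lemma cd_even : forall k : nat, cd (2*k) =
  (4*Z.of_nat k, Z.of_nat k, 2*Z.of_nat k+1, 2*Z.of_nat k+1).
Proof.
  induction k.
  - reflexivity.
  - replace (2 * S k)%nat with (S (S (2*k))) by lia.
    cbn [cd]. rewrite IHk. f_equal; [f_equal; [f_equal|]|]; lia.
Qed.

Lemma beta1_even q : beta1 (2*q) = (4*Z.of_nat q, 2*Z.of_nat q+1).
Proof. unfold beta1, c, d. cbn [cd]. rewrite cd_even. f_equal. Qed.
Lemma beta1_odd q : beta1 (2*q+1) = (2*Z.of_nat q+1, Z.of_nat q+1).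
Proof.
  unfold beta1, c, d. replace (S (2*q+1)) with (2*(S q))%nat by lia.
  replace (2*q+1)%nat with (S (2*q)) by lia. cbn [cd].
  rewrite !cd_even. f_equal; lia.
Qed.
Lemma beta2_even q : beta2 (2*q) = (2*Z.of_nat q+1, Z.of_nat q).
Proof. unfold beta2, c, d. cbn [cd]. rewrite cd_even. f_equal. Qed.
Lemma beta2_odd q : beta2 (2*q+1) = (4*Z.of_nat q+4, 2*Z.of_nat q+1).
Proof.
  unfold beta2, c, d. replace (S (2*q+1)) with (2*(S q))%nat by lia.
  replace (2*q+1)%nat with (S (2*q)) by lia. cbn [cd].
  rewrite !cd_even. f_equal; lia.
Qed.

Inductive ty := TP1 | TP2 | TN1 | TN2.
Definition typ (x : rt) : ty :=
  if 0 <? fst x + snd x then (if fst x - 2*snd x <? 0 then TP1 else TP2)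
  else (if 0 <? fst x - 2*snd x then TN1 else TN2).
Definition compat (s t : ty) : bool :=
  match s, t with
  | TP1, TP2 | TP2, TP1 | TN1, TN2 | TN2, TN1
  | TP1, TN1 | TN1, TP1 | TP2, TN2 | TN2, TP2 => true
  | _, _ => false
  end.


Lemma two x y : RR x -> RR y -> ~ Rt (rt_sub x y) -> x <> y ->
  compat (typ x) (typ y) = true.
Proof.
  destruct x as [a1 b1], y as [a2 b2]; intros H1 H2 H3 H4.
  assert (a1 <> a2 \/ b1 <> b2) by
    (destruct (Z.eq_dec a1 a2); destruct (Z.eq_dec b1 b2); subst; auto).
  clear H4.
  unfold typ, Rt, RR, rt_sub, rt_add, rt_opp in *; cbn [fst snd] in *.
  ltbs; cbn; try reflexivity; exfalso; zl.
Qed.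

Ltac cls_pre x := intros Ht HR; destruct x as [a b]; unfold typ in Ht;
  cbn [fst snd] in *; ltbs; try discriminate;
  unfold RR in HR; cbn [fst snd] in HR;
  destruct HR as [Hm|[Hm|[[Hm|Hm] Ho]]]; try (exfalso; lia).

Lemma cls1 x : typ x = TP1 -> RR x -> exists j, x = beta1 j.
Proof.
  cls_pre x.
  - exists (2*Z.to_nat (b-1)+1)%nat. rewrite beta1_odd. f_equal; lia.
  - exists (2*Z.to_nat (b/2))%nat. rewrite beta1_even. f_equal; zl.
Qed.
Lemma cls2 x : typ x = TP2 -> RR x -> exists j, x = beta2 j.
Proof.
  cls_pre x.
  - exists (2*Z.to_nat b)%nat. rewrite beta2_even. f_equal; lia.
  - exists (2*Z.to_nat (b/2)+1)%nat. rewrite beta2_odd. f_equal; zl.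
Qed.
Lemma cls3 x : typ x = TN1 -> RR x -> exists j, x = rt_opp (beta1 j).
Proof.
  cls_pre x.
  - exists (2*Z.to_nat (-b-1)+1)%nat. rewrite beta1_odd. unfold rt_opp; cbn [fst snd]. f_equal; lia.
  - exists (2*Z.to_nat ((-b-1)/2))%nat. rewrite beta1_even. unfold rt_opp; cbn [fst snd]. f_equal; zl.
Qed.
Lemma cls4 x : typ x = TN2 -> RR x -> exists j, x = rt_opp (beta2 j).
Proof.
  cls_pre x.
  - exists (2*Z.to_nat (-b))%nat. rewrite beta2_even. unfold rt_opp; cbn [fst snd]. f_equal; lia.
  - exists (2*Z.to_nat ((-b-1)/2)+1)%nat. rewrite beta2_odd. unfold rt_opp; cbn [fst snd]. f_equal; zl.
Qed.

Lemma pos_typ x : RR x -> pos_rt x -> typ x = TP1 \/ typ x = TP2.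
Proof.
  destruct x as [a b]; unfold RR, pos_rt, typ; cbn [fst snd]; intros; ltbs; auto; exfalso; zl.
Qed.

Lemma rt_eq_dec (x y : rt) : {x = y} + {x <> y}.
Proof. decide equality; apply Z.eq_dec. Qed.

Lemma main (S : rt -> Prop) : (forall x, S x -> RR x) -> pi_system S -> card_gt1 S ->
  exists x y, S x /\ S y /\ compat (typ x) (typ y) = true /\ set_eq S (pair_set x y).
Proof.
  intros HR Hpi (x & y & Hx & Hy & Hxy).
  assert (Hc : forall u v, S u -> S v -> u <> v -> compat (typ u) (typ v) = true).
  { intros u v Hu Hv Huv. apply two; auto. intro Hr. apply (Hpi u v Hu Hv).
    now apply root_Rt. }
  exists x, y. repeat split; auto.
  - intro Hz. destruct (rt_eq_dec z x) as [->|Hzx]; [now left|].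
    destruct (rt_eq_dec z y) as [->|Hzy]; [now right|]. exfalso.
    pose proof (Hc x y Hx Hy Hxy) as C1.
    assert (C2 := Hc x z Hx Hz (fun e => Hzx (eq_sym e))).
    assert (C3 := Hc y z Hy Hz (fun e => Hzy (eq_sym e))).
    destruct (typ x), (typ y), (typ z); discriminate.
  - intros [->| ->]; auto.
Qed.

Lemma Rt_sym x y : Rt (rt_sub x y) -> Rt (rt_sub y x).
Proof.
  destruct x, y; unfold Rt, RR, rt_sub, rt_add, rt_opp; cbn [fst snd]; zl.
Qed.
Lemma Rt_0 x : ~ Rt (rt_sub x x).
Proof.
  destruct x; unfold Rt, RR, rt_sub, rt_add, rt_opp; cbn [fst snd]; zl.
Qed.

Lemma pi_pair u v : pi_system (pair_set u v) <-> ~ Rt (rt_sub u v).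
Proof.
  split.
  - intros H Hr. apply (H u v); [now left|now right|]. now apply root_Rt.
  - intros H x y Hx Hy Hr. apply root_Rt in Hr.
    destruct Hx as [->| ->], Hy as [->| ->].
    + exact (Rt_0 _ Hr).
    + exact (H Hr).
    + exact (H (Rt_sym _ _ Hr)).
    + exact (Rt_0 _ Hr).
Qed.

Lemma set_eq_swap S x y : set_eq S (pair_set x y) -> set_eq S (pair_set y x).
Proof. unfold set_eq, pair_set; intros H z; rewrite H; tauto. Qed.
End Helpers.
Import Helpers.

Ltac bform j := let q := fresh "q" in
  destruct (Nat.Even_or_Odd j) as [[q ->]|[q ->]];
  rewrite ?beta1_even, ?beta1_odd, ?beta2_even, ?beta2_odd.

Theorem theorem5p1 :
  (* (1) *)
  (forall Sigma : rt -> Prop,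
      (forall x, Sigma x -> real_root x /\ pos_rt x) ->
      pi_system Sigma -> card_gt1 Sigma ->
      exists j k : nat, set_eq Sigma (pair_set (beta1 j) (beta2 k))) /\
  (forall j k : nat,
      pi_system (pair_set (beta1 j) (beta2 k)) <->
      (Nat.modulo j 2 <> 1%nat \/ Nat.modulo k 4 <> Nat.modulo (j + 3) 4)) /\
  (* (2) *)
  (forall Sigma : rt -> Prop,
      (forall x, Sigma x -> real_root x) ->
      pi_system Sigma -> card_gt1 Sigma ->
      (exists j k : nat,
          set_eq Sigma (pair_set (beta1 j) (beta2 k)) \/
          set_eq Sigma (pair_set (rt_opp (beta1 j)) (rt_opp (beta2 k)))) \/
      (exists (i j k : nat), (i = 1%nat \/ i = 2%nat) /\
          set_eq Sigma (pair_set (beta i j) (rt_opp (beta i k))))) /\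
  (forall i j k : nat, (i = 1%nat \/ i = 2%nat) ->
      (pi_system (pair_set (beta i j) (rt_opp (beta i k))) <->
       (Nat.modulo j 2 <> Nat.modulo i 2 \/ Nat.modulo k 2 <> Nat.modulo i 2 \/
        Nat.modulo j 4 = Nat.modulo k 4))).
Proof.
  split; [|split; [|split]].
  - intros S HS Hpi Hc.
    destruct (main S (fun x H => real_RR x (proj1 (HS x H))) Hpi Hc)
      as (x & y & Hx & Hy & Ct & Heq).
    destruct (HS x Hx) as [Rx Px]; destruct (HS y Hy) as [Ry Py].
    apply real_RR in Rx, Ry.
    destruct (pos_typ x Rx Px) as [Tx|Tx], (pos_typ y Ry Py) as [Ty|Ty];
      rewrite Tx, Ty in Ct; try discriminate.
    + destruct (cls1 x Tx Rx) as [j ->], (cls2 y Ty Ry) as [k ->]. now exists j, k.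
    + destruct (cls2 x Tx Rx) as [j ->], (cls1 y Ty Ry) as [k ->].
      exists k, j. now apply set_eq_swap.
  - intros j k. rewrite pi_pair. bform j; bform k;
      unfold Rt, RR, rt_sub, rt_add, rt_opp; cbn [fst snd]; split; intros; zl.
  - intros S HS Hpi Hc.
    destruct (main S (fun x H => real_RR x (HS x H)) Hpi Hc)
      as (x & y & Hx & Hy & Ct & Heq).
    assert (Rx := real_RR x (HS x Hx)); assert (Ry := real_RR y (HS y Hy)).
    destruct (typ x) eqn:Tx, (typ y) eqn:Ty; try discriminate Ct.
    + destruct (cls1 x Tx Rx) as [j ->], (cls2 y Ty Ry) as [k ->].
      left; exists j, k; now left.
    + destruct (cls1 x Tx Rx) as [j ->], (cls3 y Ty Ry) as [k ->].
      right; exists 1%nat, j, k; split; auto.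
    + destruct (cls2 x Tx Rx) as [j ->], (cls1 y Ty Ry) as [k ->].
      left; exists k, j; left; now apply set_eq_swap.
    + destruct (cls2 x Tx Rx) as [j ->], (cls4 y Ty Ry) as [k ->].
      right; exists 2%nat, j, k; split; auto.
    + destruct (cls3 x Tx Rx) as [j ->], (cls1 y Ty Ry) as [k ->].
      right; exists 1%nat, k, j; split; auto; now apply set_eq_swap.
    + destruct (cls3 x Tx Rx) as [j ->], (cls4 y Ty Ry) as [k ->].
      left; exists j, k; now right.
    + destruct (cls4 x Tx Rx) as [j ->], (cls2 y Ty Ry) as [k ->].
      right; exists 2%nat, k, j; split; auto; now apply set_eq_swap.
    + destruct (cls4 x Tx Rx) as [j ->], (cls3 y Ty Ry) as [k ->].
      left; exists k, j; right; now apply set_eq_swap.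
  - intros i j k [-> | ->]; cbn [beta Nat.eqb]; rewrite pi_pair; bform j; bform k;
      unfold Rt, RR, rt_sub, rt_add, rt_opp; cbn [fst snd]; split; intros; zl.
Qed.
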